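(* $\mathsf{LDL}\equiv_{sW}\mathsf{C}_\mathbb{N}$.
   Context: A represented space is a pair $(X,\delta_X)$ with $\delta_X:\subseteq\mathbb{N}^\mathbb{N}\to X$ a partial surjection. A realizer of $f:\subseteq X\rightrightarrows Y$ is a partial $F$ with $\delta_Y F(p)\in f(\delta_X(p))$ for all $p\in\mathrm{dom}(f\circ\delta_X)$. $f\le_{sW}g$ if there are computable partial $H,K:\subseteq\mathbb{N}^\mathbb{N}\to\mathbb{N}^\mathbb{N}$ such that $HGK$ realizes $f$ for every realizer $G$ of $g$; $\equiv_{sW}$ is the induced equivalence. $\mathcal{A}_-(X)$ denotes closed subsets of $X$ represented by negative information (for $\mathbb N$: a name of $A$ enumerates $\mathbb N\setminus A$; for $2^\mathbb N$: a name enumerates words $w$ such that the union of the cylinders $w2^\mathbb N$ is $2^\mathbb N\setminus A$). $\mathsf C_\mathbb N:\subseteq\mathcal A_-(\mathbb N)\rightrightarrows\mathbb N$, $A\mapsto A$, defined on nonempty $A$. $\mu$ is the uniform measure on $2^\mathbb N$ with $\mu(w2^\mathbb N)=2^{-|w|}$. The Lebesgue Density Lemma problem is $\mathsf{LDL}:\subseteq\mathcal A_-(2^\mathbb N)\times\mathbb N\rightrightarrows\{0,1\}^*$, $(A,k)\mapsto\{w\in\{0,1\}^*:\mu(A\cap w2^\mathbb N)/2^{-|w|}\ge 1-2^{-k}\}$, with domain $\{(A,k):\mu(A)>0\}$. *)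

(* Defs.v *)
From Stdlib Require Import Reals List Arith.
Import ListNotations.
Set Implicit Arguments.

Definition baire := nat -> nat.

(** * Oracle (Kleene) mu-recursive functionals: the model of computation. Arities are not enforced; missing arguments default to 0. *)
Inductive oterm : Type :=
| OZero
| OSucc
| OProj (i : nat)
| OOracle
| OComp (f : oterm) (gs : list oterm)
| OPrec (f g : oterm)
| OMu (f : oterm).

Inductive oeval (p : baire) : oterm -> list nat -> nat -> Prop :=
| ev_zero a : oeval p OZero a 0
| ev_succ a : oeval p OSucc a (S (hd 0 a))
| ev_proj i a : oeval p (OProj i) a (nth i a 0)
| ev_oracle a : oeval p OOracle a (p (hd 0 a))
| ev_comp f gs a vs v :
    Forall2 (fun g w => oeval p g a w) gs vs ->
    oeval p f vs v -> oeval p (OComp f gs) a v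
| ev_prec0 f g xs v :
    oeval p f xs v -> oeval p (OPrec f g) (0 :: xs) v
| ev_precS f g n xs r v :
    oeval p (OPrec f g) (n :: xs) r ->
    oeval p g (n :: r :: xs) v -> oeval p (OPrec f g) (S n :: xs) v
| ev_mu f a y :
    oeval p f (y :: a) 0 ->
    (forall z, z < y -> exists m, oeval p f (z :: a) (S m)) ->
    oeval p (OMu f) a y.

(** The partial computable map Baire -> Baire computed by [t]:
    on input [p] it outputs [q] iff every [q n] is computed from oracle [p]
    on input [n]. (Defined at [p] iff all these computations halt.) *)
Definition computes (t : oterm) (p q : baire) : Prop :=
  forall n, oeval p t [n] (q n).

Record repspace : Type := RepSpace {
  carrier :> Type;
  delta : baire -> option carrier }.

Record problem (X Y : repspace) : Type := Problem {
  pdom : X -> Prop;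
  prel : X -> Y -> Prop }.

Definition realizer (X Y : repspace) (g : problem X Y)
    (G : baire -> option baire) : Prop :=
  forall p x, delta X p = Some x -> pdom g x ->
    exists q, G p = Some q /\
      exists y, delta Y q = Some y /\ prel g x y.

(** [H o G o K] realizes [f], where [H], [K] are the partial computable maps
    computed by [tH], [tK]. *)
Definition comp_realizes (X Y : repspace) (f : problem X Y)
    (tH : oterm) (G : baire -> option baire) (tK : oterm) : Prop :=
  forall p x, delta X p = Some x -> pdom f x ->
    (exists q, computes tK p q) /\
    forall q, computes tK p q ->
      exists r, G q = Some r /\
        (exists s, computes tH r s) /\
        forall s, computes tH r s ->
          exists y, delta Y s = Some y /\ prel f x y.

Definition sW_le (X Y Z W : repspace) (f : problem X Y) (g : problem Z W) : Prop :=
  exists tH tK : oterm, forall G, realizer g G -> comp_realizes f tH G tK.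

Definition sW_equiv (X Y Z W : repspace) (f : problem X Y) (g : problem Z W) : Prop :=
  sW_le f g /\ sW_le g f.

Definition NatRep : repspace := @RepSpace nat (fun p => Some (p 0)).

(** Coding of finite binary words by natural numbers (a bijection):
    0 |-> [], 2k+1 |-> false :: w_k, 2k+2 |-> true :: w_k. *)
Fixpoint word_aux (fuel n : nat) : list bool :=
  match fuel with
  | 0 => []
  | S fu =>
    match n with
    | 0 => []
    | S m => (if Nat.odd m then true else false) :: word_aux fu (Nat.div2 m)
    end
  end.
Definition word_of_nat (n : nat) : list bool := word_aux n n.

Definition WordRep : repspace := @RepSpace (list bool) (fun p => Some (word_of_nat (p 0))).

(** A_-(N): p names the complement of {n | exists i, p i = n+1}
    (the value 0 is a "no information" padding symbol). *)
Definition ClosedNatRep : repspace :=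
  @RepSpace (nat -> Prop) (fun p => Some (fun n => ~ exists i, p i = S n)).

Definition cantor := nat -> bool.
Definition is_prefix (w : list bool) (x : cantor) : Prop :=
  forall j, j < length w -> nth j w false = x j.

(** A_-(2^N): p enumerates (codes+1 of) words w such that the union of
    the cylinders w2^N is the complement of the named set. *)
Definition ClosedCantorRep : repspace :=
  @RepSpace (cantor -> Prop)
    (fun p => Some (fun x => forall i m, p i = S m -> ~ is_prefix (word_of_nat m) x)).

Definition ProdRep (X Y : repspace) : repspace :=
  @RepSpace (X * Y)%type
    (fun p => match delta X (fun i => p (2 * i)), delta Y (fun i => p (2 * i + 1)) with
              | Some x, Some y => Some (x, y)
              | _, _ => None
              end).

(** * Uniform (Lebesgue) measure on 2^N via the standard outer measure:
    the infimum over countable covers by cylinders of sum 2^{-|w|}. *)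
Local Open Scope R_scope.

Definition cyl_weight (o : option (list bool)) : R :=
  match o with None => 0 | Some w => / 2 ^ length w end.

Fixpoint psum (c : nat -> option (list bool)) (N : nat) : R :=
  match N with
  | O => 0
  | S N' => psum c N' + cyl_weight (c N')
  end.

Definition covers (c : nat -> option (list bool)) (S : cantor -> Prop) : Prop :=
  forall x, S x -> exists i w, c i = Some w /\ is_prefix w x.

(** mu_ge S r  :<->  mu*(S) >= r. *)
Definition mu_ge (S : cantor -> Prop) (r : R) : Prop :=
  forall c, covers c S -> forall r', r' < r -> exists N, r' < psum c N.

Definition mu_pos (S : cantor -> Prop) : Prop := exists r, 0 < r /\ mu_ge S r.

Definition C_N : problem ClosedNatRep NatRep :=
  @Problem ClosedNatRep NatRep (fun A => exists n, A n) (fun A n => A n).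

Definition LDL : problem (ProdRep ClosedCantorRep NatRep) WordRep :=
  @Problem (ProdRep ClosedCantorRep NatRep) WordRep
    (fun Ak => mu_pos (fst Ak))
    (fun Ak w => mu_ge (fun x => fst Ak x /\ is_prefix w x)
                       ((1 - / 2 ^ snd Ak) * / 2 ^ length w)).

(* Main.v *)
Require Import Defs.
From Stdlib Require Import Reals List Arith.
From Stdlib Require Import Lia Bool Lra Classical ClassicalEpsilon FunctionalExtensionality.
Import ListNotations.

Section F1.

Section Eval.
Variable p : baire.

Definition repL (w : nat) (t : oterm) (f : list nat -> nat) : Prop :=
  forall a, length a = w -> forall v, oeval p t a v <-> v = f a.

Lemma rep_zero w : repL w OZero (fun _ => 0).
Proof. intros a _ v; split; [intro H; inversion H; auto | intros ->; constructor]. Qed.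

Lemma rep_succ w : repL w OSucc (fun a => S (hd 0 a)).
Proof. intros a _ v; split; [intro H; inversion H; auto | intros ->; constructor]. Qed.

Lemma rep_proj w i : repL w (OProj i) (fun a => nth i a 0).
Proof. intros a _ v; split; [intro H; inversion H; auto | intros ->; constructor]. Qed.

Lemma rep_oracle w : repL w OOracle (fun a => p (hd 0 a)).
Proof. intros a _ v; split; [intro H; inversion H; auto | intros ->; constructor]. Qed.

Lemma rep_comp m w f F gs Gs :
  repL m f F -> Forall2 (fun g G => repL w g G) gs Gs -> length gs = m ->
  repL w (OComp f gs) (fun a => F (map (fun G => G a) Gs)).
Proof.
  intros HF HG Hl a Ha v.
  assert (Hvs : forall vs, Forall2 (fun g w0 => oeval p g a w0) gs vs <-> vs = map (fun G => G a) Gs).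
  { clear Hl. induction HG as [|g G gs' Gs' H1 H2 IH]; intros vs; split.
    - intro H; inversion H; auto.
    - intros ->; constructor.
    - intro H; inversion H as [|? ? ? ? H3 H4]; subst vs. simpl. f_equal. apply (H1 a Ha); auto. apply IH; auto.
    - intros ->; constructor. apply (H1 a Ha); auto. apply IH; auto. }
  assert (Hlen : length (map (fun G => G a) Gs) = m).
  { rewrite length_map. rewrite <- Hl. symmetry. eapply Forall2_length; eauto. }
  split.
  - intro H; inversion H as [| | | |? ? ? vs ? Hf2 Hf| | |]; subst.
    apply Hvs in Hf2. subst vs. apply (HF _ Hlen); auto.
  - intros ->. econstructor. apply Hvs; reflexivity. apply (HF _ Hlen); auto.
Qed.

Fixpoint recF (step : nat -> nat -> nat) (base : nat) (n : nat) : nat :=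
  match n with 0 => base | S m => step m (recF step base m) end.

Lemma rep_prec n f F g G :
  repL n f F -> repL (S (S n)) g G ->
  forall x xs, length xs = n -> forall v,
  oeval p (OPrec f g) (x :: xs) v <-> v = recF (fun m r => G (m :: r :: xs)) (F xs) x.
Proof.
  intros HF HG x xs Hxs. subst n. induction x as [|x IH]; intros v; split.
  - intro H; inversion H; subst. apply (HF _ eq_refl); auto.
  - intros ->. constructor. apply (HF _ eq_refl); auto.
  - intro H; inversion H; subst.
    match goal with H5 : oeval p (OPrec f g) (x :: xs) ?r, H6 : oeval p g _ v |- _ =>
      apply IH in H5; subst r; apply (HG (x :: _ :: xs)) in H6; [exact H6| simpl; auto] end.
  - intros ->. simpl. econstructor. apply IH; reflexivity.
    apply (HG (x :: _ :: xs)); simpl; auto.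
Qed.

Lemma rep_ext w t f g : repL w t f -> (forall a, length a = w -> f a = g a) -> repL w t g.
Proof. intros H E a Ha v. rewrite <- E by auto. apply H; auto. Qed.

Definition plusT := OPrec (OProj 0) (OComp OSucc [OProj 1]).
Definition multT := OPrec OZero (OComp plusT [OProj 1; OProj 2]).
Definition predT := OPrec OZero (OProj 0).
Definition monusT := OPrec (OProj 0) (OComp predT [OProj 1]).

Lemma rep_prec' n f F g G :
  repL n f F -> repL (S (S n)) g G ->
  repL (S n) (OPrec f g) (fun a => recF (fun m r => G (m :: r :: tl a)) (F (tl a)) (hd 0 a)).
Proof.
  intros HF HG [|x xs] Ha v; [discriminate|]. simpl in Ha. injection Ha; intro Ha'.
  apply (rep_prec n f F g G HF HG x xs Ha').
Qed.

Ltac solve_f2 := repeat (constructor; [apply rep_proj|]); constructor.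

Lemma rep_plus : repL 2 plusT (fun a => nth 0 a 0 + nth 1 a 0).
Proof.
  eapply rep_ext. apply rep_prec'. apply rep_proj.
  eapply rep_comp. apply rep_succ. solve_f2. reflexivity.
  intros [|x [|y [|]]] H; try discriminate. simpl. clear H.
  induction x; simpl; auto.
Qed.

Lemma rep_mult : repL 2 multT (fun a => nth 0 a 0 * nth 1 a 0).
Proof.
  eapply rep_ext. apply rep_prec'. apply rep_zero.
  eapply rep_comp. apply rep_plus. solve_f2. reflexivity.
  intros [|x [|y [|]]] H; try discriminate. simpl. clear H.
  induction x; simpl; auto. rewrite IHx. lia.
Qed.

Lemma rep_pred : repL 1 predT (fun a => pred (hd 0 a)).
Proof.
  eapply rep_ext. apply rep_prec'. apply rep_zero. apply rep_proj.
  intros [|x [|]] H; try discriminate. simpl. destruct x; auto.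
Qed.

Lemma rep_monus : repL 2 monusT (fun a => nth 1 a 0 - nth 0 a 0).
Proof.
  eapply rep_ext. apply rep_prec'. apply rep_proj.
  eapply rep_comp. apply rep_pred. solve_f2. reflexivity.
  intros [|x [|y [|]]] H; try discriminate. simpl. clear H.
  induction x; simpl. lia. rewrite IHx. lia.
Qed.

End Eval.

Inductive ex : Type :=
| V (i : nat) | K (k : nat) | Sc (e : ex) | Pl (x y : ex) | Tm (x y : ex) | Mn (x y : ex)
| Orc (x : ex) | Rec (x z s : ex).

Fixpoint ev (p : baire) (a : list nat) (e : ex) : nat :=
  match e with
  | V i => nth i a 0
  | K k => k
  | Sc e => S (ev p a e)
  | Pl x y => ev p a x + ev p a y
  | Tm x y => ev p a x * ev p a y
  | Mn x y => ev p a x - ev p a y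
  | Orc x => p (ev p a x)
  | Rec x z s => recF (fun m r => ev p (m :: r :: a) s) (ev p a z) (ev p a x)
  end.

Fixpoint kT (k : nat) : oterm := match k with 0 => OZero | S k => OComp OSucc [kT k] end.

Fixpoint cmp (w : nat) (e : ex) : oterm :=
  match e with
  | V i => OProj i
  | K k => kT k
  | Sc e => OComp OSucc [cmp w e]
  | Pl x y => OComp plusT [cmp w x; cmp w y]
  | Tm x y => OComp multT [cmp w x; cmp w y]
  | Mn x y => OComp monusT [cmp w y; cmp w x]
  | Orc x => OComp OOracle [cmp w x]
  | Rec x z s => OComp (OPrec (cmp w z) (cmp (S (S w)) s)) (cmp w x :: map OProj (seq 0 w))
  end.

Lemma map_nth_seq_id (a : list nat) : map (fun i => nth i a 0) (seq 0 (length a)) = a.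
Proof.
  induction a as [|x a IH]; simpl; auto. f_equal. rewrite <- seq_shift, map_map. simpl.
  exact IH.
Qed.

Lemma projs_ok p W w : forall s,
  Forall2 (fun g G => repL p W g G) (map OProj (seq s w)) (map (fun i a => nth i a 0) (seq s w)).
Proof. induction w; intros s; simpl; constructor. apply rep_proj. apply IHw. Qed.

Lemma cmp_ok p e : forall w, repL p w (cmp w e) (fun a => ev p a e).
Proof.
  induction e; intros w; simpl.
  - apply rep_proj.
  - induction k; simpl. apply rep_zero.
    eapply rep_ext. eapply rep_comp. apply rep_succ. constructor. apply IHk. constructor.
    reflexivity. reflexivity.
  - eapply rep_ext. eapply rep_comp. apply rep_succ. constructor. apply IHe. constructor.
    reflexivity. reflexivity.
  - eapply rep_ext. eapply rep_comp. apply rep_plus. constructor. apply IHe1. constructor.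
    apply IHe2. constructor. reflexivity. reflexivity.
  - eapply rep_ext. eapply rep_comp. apply rep_mult. constructor. apply IHe1. constructor.
    apply IHe2. constructor. reflexivity. reflexivity.
  - eapply rep_ext. eapply rep_comp. apply rep_monus. constructor. apply IHe2. constructor.
    apply IHe1. constructor. reflexivity. reflexivity.
  - eapply rep_ext. eapply rep_comp. apply rep_oracle. constructor. apply IHe. constructor.
    reflexivity. reflexivity.
  - eapply rep_ext. eapply rep_comp. apply (rep_prec' p w). apply IHe2. apply IHe3.
    constructor. apply IHe1.
    instantiate (1 := map (fun i a => nth i a 0) (seq 0 w)).
    { clear. apply projs_ok. }
    simpl. rewrite length_map, length_seq. reflexivity.
    intros a Ha. simpl. rewrite map_map. subst w. rewrite map_nth_seq_id. reflexivity.
Qed.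

Lemma computes_cmp p e q : computes (cmp 1 e) p q <-> forall n, q n = ev p [n] e.
Proof.
  unfold computes. split; intros H n.
  - apply (cmp_ok p e 1 [n] eq_refl). apply H.
  - apply (cmp_ok p e 1 [n] eq_refl). apply H.
Qed.

End F1.

Section F2.

Fixpoint lift (c k : nat) (e : ex) : ex :=
  match e with
  | V i => if i <? c then V i else V (i + k)
  | K n => K n
  | Sc e => Sc (lift c k e)
  | Pl x y => Pl (lift c k x) (lift c k y)
  | Tm x y => Tm (lift c k x) (lift c k y)
  | Mn x y => Mn (lift c k x) (lift c k y)
  | Orc x => Orc (lift c k x)
  | Rec x z s => Rec (lift c k x) (lift c k z) (lift (S (S c)) k s)
  end.

Lemma recF_ext f g b n : (forall m r, f m r = g m r) -> recF f b n = recF g b n.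
Proof. intros H; induction n; simpl; auto. rewrite IHn; auto. Qed.

Lemma ev_lift p e : forall b l a,
  ev p (b ++ l ++ a) (lift (length b) (length l) e) = ev p (b ++ a) e.
Proof.
  induction e; intros b l a; simpl; try (rewrite ?IHe, ?IHe1, ?IHe2; reflexivity).
  - destruct (Nat.ltb_spec i (length b)).
    + simpl. rewrite !app_nth1; auto.
    + simpl. rewrite !app_nth2 by lia. f_equal. lia.
  - rewrite IHe1, IHe2. apply recF_ext. intros m r.
    apply (IHe3 (m :: r :: b) l a).
Qed.

Lemma ev_lift0 p e x a : ev p (x :: a) (lift 0 1 e) = ev p a e.
Proof. apply (ev_lift p e [] [x] a). Qed.

Lemma ev_lift11 p e j x a : ev p (j :: x :: a) (lift 1 1 e) = ev p (j :: a) e.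
Proof. apply (ev_lift p e [j] [x] a). Qed.

Lemma ev_lift02 p e x y a : ev p (x :: y :: a) (lift 0 2 e) = ev p a e.
Proof. apply (ev_lift p e [] [x;y] a). Qed.

Fixpoint natsum (n : nat) (f : nat -> nat) : nat :=
  match n with 0 => 0 | S n => natsum n f + f n end.
Fixpoint natprod (n : nat) (f : nat -> nat) : nat :=
  match n with 0 => 1 | S n => natprod n f * f n end.
Fixpoint fa (n : nat) (f : nat -> bool) : bool :=
  match n with 0 => true | S n => fa n f && f n end.

Lemma natsum_ext n f g : (forall j, j < n -> f j = g j) -> natsum n f = natsum n g.
Proof. induction n; simpl; intros H; auto. rewrite IHn, H; auto. Qed.
Lemma natprod_ext n f g : (forall j, j < n -> f j = g j) -> natprod n f = natprod n g.
Proof. induction n; simpl; intros H; auto. rewrite IHn, H; auto. Qed.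
Lemma fa_ext n f g : (forall j, j < n -> f j = g j) -> fa n f = fa n g.
Proof. induction n; simpl; intros H; auto. rewrite IHn, H; auto. Qed.

Lemma natprod_b2n n f : natprod n (fun i => Nat.b2n (f i)) = Nat.b2n (fa n f).
Proof. induction n; simpl; auto. rewrite IHn. destruct (fa n f), (f n); reflexivity. Qed.

Definition sumE n body := Rec n (K 0) (Pl (V 1) (lift 1 1 body)).
Definition prodE n body := Rec n (K 1) (Tm (V 1) (lift 1 1 body)).
Definition oddE x := Rec x (K 0) (Mn (K 1) (V 1)).
Definition div2E x := Rec x (K 0) (Pl (V 1) (oddE (V 0))).
Definition pow2E x := Rec x (K 1) (Pl (V 1) (V 1)).
Definition notE x := Mn (K 1) x.
Definition orE x y := Mn (K 1) (Tm (Mn (K 1) x) (Mn (K 1) y)).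
Definition eqbE x y := Mn (K 1) (Pl (Mn x y) (Mn y x)).
Definition ltE x y := Mn (K 1) (Mn (K 1) (Mn y x)).
Definition iteE c x y := Pl (Tm c x) (Tm (Mn (K 1) c) y).
Definition TE x := div2E (Mn x (K 1)).
Definition iterTE i c := Rec i c (TE (V 1)).

Lemma ev_sumE p a n body : ev p a (sumE n body) = natsum (ev p a n) (fun j => ev p (j :: a) body).
Proof. simpl. induction (ev p a n); simpl; auto. rewrite IHn0, ev_lift11. reflexivity. Qed.

Lemma ev_prodE p a n body : ev p a (prodE n body) = natprod (ev p a n) (fun j => ev p (j :: a) body).
Proof. simpl. induction (ev p a n); simpl; auto. rewrite IHn0, ev_lift11. reflexivity. Qed.

Lemma ev_oddE p a x : ev p a (oddE x) = Nat.b2n (Nat.odd (ev p a x)).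
Proof.
  simpl. induction (ev p a x); simpl; auto. rewrite IHn, Nat.odd_succ, <- Nat.negb_odd.
  destruct (Nat.odd n); reflexivity.
Qed.

Lemma div2_S n : Nat.div2 (S n) = Nat.div2 n + Nat.b2n (Nat.odd n).
Proof.
  pose proof (Nat.div2_odd n) as H1. pose proof (Nat.div2_odd (S n)) as H2.
  rewrite Nat.odd_succ, <- Nat.negb_odd in H2.
  destruct (Nat.odd n); simpl in *; lia.
Qed.

Lemma ev_div2E p a x : ev p a (div2E x) = Nat.div2 (ev p a x).
Proof.
  cbn [ev div2E]. induction (ev p a x). reflexivity. cbn [recF]. rewrite IHn.
  pose proof (ev_oddE p (n :: Nat.div2 n :: a) (V 0)) as H. cbn [ev oddE nth] in H.
  cbn [ev oddE nth]. rewrite H.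
  rewrite div2_S. reflexivity.
Qed.

Lemma ev_pow2E p a x : ev p a (pow2E x) = 2 ^ (ev p a x).
Proof. simpl. induction (ev p a x); simpl; auto. rewrite IHn. lia. Qed.

Lemma ev_notE p a b : ev p a (notE (K (Nat.b2n b))) = Nat.b2n (negb b).
Proof. destruct b; reflexivity. Qed.

Lemma b2n_le1 b : Nat.b2n b <= 1.
Proof. destruct b; simpl; lia. Qed.

Lemma ev_orE p a x y b1 b2 : ev p a x = Nat.b2n b1 -> ev p a y = Nat.b2n b2 ->
  ev p a (orE x y) = Nat.b2n (b1 || b2).
Proof. intros H1 H2. simpl. rewrite H1, H2. destruct b1, b2; reflexivity. Qed.

Lemma ev_andE p a x y b1 b2 : ev p a x = Nat.b2n b1 -> ev p a y = Nat.b2n b2 ->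
  ev p a (Tm x y) = Nat.b2n (b1 && b2).
Proof. intros H1 H2. simpl. rewrite H1, H2. destruct b1, b2; reflexivity. Qed.

Lemma ev_notE' p a x b : ev p a x = Nat.b2n b -> ev p a (notE x) = Nat.b2n (negb b).
Proof. intros H1. simpl. rewrite H1. destruct b; reflexivity. Qed.

Lemma ev_eqzE p a x : ev p a (notE x) = Nat.b2n (ev p a x =? 0).
Proof. simpl. destruct (ev p a x); reflexivity. Qed.

Lemma ev_eqbE p a x y b1 b2 : ev p a x = Nat.b2n b1 -> ev p a y = Nat.b2n b2 ->
  ev p a (eqbE x y) = Nat.b2n (Bool.eqb b1 b2).
Proof. intros H1 H2. simpl. rewrite H1, H2. destruct b1, b2; reflexivity. Qed.

Lemma ev_ltE p a x y : ev p a (ltE x y) = Nat.b2n (ev p a x <? ev p a y).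
Proof.
  simpl. destruct (Nat.ltb_spec (ev p a x) (ev p a y)).
  - replace (ev p a y - ev p a x) with (S (ev p a y - ev p a x - 1)) by lia. reflexivity.
  - replace (ev p a y - ev p a x) with 0 by lia. reflexivity.
Qed.

Lemma ev_iteE p a c x y b : ev p a c = Nat.b2n b ->
  ev p a (iteE c x y) = if b then ev p a x else ev p a y.
Proof. intros H. simpl. rewrite H. destruct b; simpl; lia. Qed.

Definition T (c : nat) : nat := Nat.div2 (c - 1).
Definition iterT (i c : nat) : nat := Nat.iter i T c.

Lemma ev_TE p a x : ev p a (TE x) = T (ev p a x).
Proof. unfold TE. rewrite ev_div2E. reflexivity. Qed.

Lemma ev_iterTE p a i c : ev p a (iterTE i c) = iterT (ev p a i) (ev p a c).
Proof.
  simpl. unfold iterT. induction (ev p a i); simpl; auto. rewrite IHn.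
  pose proof (ev_TE p (n :: Nat.iter n T (ev p a c) :: a) (V 1)) as H. simpl in H. exact H.
Qed.

Definition okb (x y : nat) : bool :=
  (x =? 0) || (negb (y =? 0) && Bool.eqb (Nat.odd (x - 1)) (Nat.odd (y - 1))).
Definition preF (a b : nat) : bool := fa a (fun i => okb (iterT i a) (iterT i b)).

Definition okE x y := orE (notE x) (Tm (notE (notE y)) (eqbE (oddE (Mn x (K 1))) (oddE (Mn y (K 1))))).

Lemma ev_okE p a x y : ev p a (okE x y) = Nat.b2n (okb (ev p a x) (ev p a y)).
Proof.
  unfold okE, okb. apply ev_orE. apply ev_eqzE.
  apply ev_andE. apply ev_notE'. apply ev_eqzE.
  apply ev_eqbE; apply ev_oddE.
Qed.

Definition preE x y := prodE x (okE (iterTE (V 0) (lift 0 1 x)) (iterTE (V 0) (lift 0 1 y))).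

Lemma ev_preE p a x y : ev p a (preE x y) = Nat.b2n (preF (ev p a x) (ev p a y)).
Proof.
  unfold preE. rewrite ev_prodE. unfold preF. rewrite <- natprod_b2n.
  apply natprod_ext. intros j _.
  rewrite ev_okE, !ev_iterTE. simpl. rewrite !ev_lift0. reflexivity.
Qed.

End F2.

Section F3.

Lemma div2_le n : Nat.div2 n <= n.
Proof. pose proof (Nat.div2_odd n). destruct (Nat.odd n); simpl in *; lia. Qed.

Lemma word_aux_stable f1 : forall f2 n, n <= f1 -> n <= f2 -> word_aux f1 n = word_aux f2 n.
Proof.
  induction f1; intros f2 n H1 H2.
  - replace n with 0 by lia. destruct f2; reflexivity.
  - destruct f2. replace n with 0 by lia. reflexivity.
    destruct n. reflexivity. simpl. f_equal.
    apply IHf1; pose proof (Nat.le_div2 n); pose proof (div2_le n); lia.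
Qed.

Lemma word0 : word_of_nat 0 = [].
Proof. reflexivity. Qed.

Lemma wordS m : word_of_nat (S m) = Nat.odd m :: word_of_nat (Nat.div2 m).
Proof.
  unfold word_of_nat. simpl. f_equal. destruct (Nat.odd m); reflexivity.
  apply word_aux_stable; pose proof (div2_le m); lia.
Qed.

Lemma word_T c : word_of_nat (T c) = tl (word_of_nat c).
Proof. destruct c. reflexivity. rewrite wordS. unfold T. simpl. rewrite Nat.sub_0_r. reflexivity. Qed.

Lemma word_iterT i c : word_of_nat (iterT i c) = skipn i (word_of_nat c).
Proof.
  induction i; simpl. reflexivity. unfold iterT in *. simpl. rewrite word_T, IHi.
  generalize (word_of_nat c). clear. induction i; intros l; simpl. reflexivity.
  destruct l; simpl. destruct i; reflexivity. apply IHi.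
Qed.

Lemma word_nil c : word_of_nat c = [] -> c = 0.
Proof. destruct c; auto. rewrite wordS. discriminate. Qed.

Lemma word_len c : length (word_of_nat c) <= c.
Proof.
  induction c as [c IH] using lt_wf_ind. destruct c. simpl; lia.
  rewrite wordS. simpl. pose proof (div2_le c).
  assert (Nat.div2 c < S c) by lia. specialize (IH _ H0). lia.
Qed.

Fixpoint nat_of_word (w : list bool) : nat :=
  match w with [] => 0 | b :: w => S (2 * nat_of_word w + Nat.b2n b) end.

Lemma word_nat w : word_of_nat (nat_of_word w) = w.
Proof.
  induction w as [|b w IH]. reflexivity. cbn [nat_of_word]. rewrite wordS. f_equal.
  - replace (2 * nat_of_word w + Nat.b2n b) with (Nat.b2n b + 2 * nat_of_word w) by lia.
    rewrite Nat.odd_add_mul_2. destruct b; reflexivity.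
  - replace (2 * nat_of_word w + Nat.b2n b) with (Nat.b2n b + 2 * nat_of_word w) by lia.
    destruct b; cbn [Nat.b2n]; [rewrite Nat.add_1_l, Nat.div2_succ_double | rewrite Nat.add_0_l, Nat.div2_double]; exact IH.
Qed.

Fixpoint prefw (v u : list bool) : bool :=
  match v, u with
  | [], _ => true
  | _ :: _, [] => false
  | x :: v', y :: u' => Bool.eqb x y && prefw v' u'
  end.

Lemma fa_S' n f : fa (S n) f = f 0 && fa n (fun i => f (S i)).
Proof.
  induction n. simpl. destruct (f 0); reflexivity.
  change (fa (S (S n)) f) with (fa (S n) f && f (S n)). rewrite IHn. simpl.
  rewrite andb_assoc. reflexivity.
Qed.

Lemma preF_aux n : forall a b, length (word_of_nat a) <= n ->
  fa n (fun i => okb (iterT i a) (iterT i b)) = prefw (word_of_nat a) (word_of_nat b).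
Proof.
  induction n; intros a b H.
  - destruct (word_of_nat a) eqn:E; [|simpl in H; lia].
    simpl. reflexivity.
  - rewrite fa_S'.
    rewrite (fa_ext n _ (fun i => okb (iterT i (T a)) (iterT i (T b)))).
    2:{ intros j _. unfold iterT. rewrite !Nat.iter_succ_r. reflexivity. }
    rewrite IHn by (rewrite word_T; destruct (word_of_nat a); simpl in *; lia).
    rewrite !word_T. unfold iterT. simpl.
    destruct a as [|a']. reflexivity.
    rewrite wordS. destruct b as [|b']. reflexivity.
    rewrite wordS. unfold okb. simpl. rewrite !Nat.sub_0_r. reflexivity.
Qed.

Lemma preF_ok a b : preF a b = prefw (word_of_nat a) (word_of_nat b).
Proof. apply preF_aux. apply word_len. Qed.

Lemma prefw_spec v u : prefw v u = true <->
  length v <= length u /\ forall j, j < length v -> nth j v false = nth j u false.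
Proof.
  revert u; induction v as [|x v IH]; intros u; simpl.
  - split; auto. intros _; split; [lia| intros; lia].
  - destruct u as [|y u]; simpl.
    + split; [discriminate| intros [H _]; lia].
    + rewrite andb_true_iff, IH. split.
      * intros [E [H1 H2]]. apply Bool.eqb_prop in E. subst y. split; [lia|].
        intros [|j] Hj; auto. apply H2. lia.
      * intros [H1 H2]. split. specialize (H2 0 ltac:(lia)). simpl in H2. subst; apply eqb_reflx.
        split; [lia|]. intros j Hj. apply (H2 (S j)). lia.
Qed.

End F3.

Section F4.

Fixpoint words (D : nat) : list (list bool) :=
  match D with 0 => [[]] | S D => flat_map (fun u => [false :: u; true :: u]) (words D) end.

Definition sumlist (l : list nat) : nat := fold_right plus 0 l.

Lemma natsum_double n f : natsum (2 * n) f = natsum n (fun j => f (2 * j) + f (S (2 * j))).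
Proof.
  induction n. reflexivity. replace (2 * S n) with (S (S (2 * n))) by lia. cbn [natsum].
  rewrite IHn. lia.
Qed.

Lemma sumlist_flat h l :
  sumlist (map h (flat_map (fun u => [false :: u; true :: u]) l)) =
  sumlist (map (fun u => h (false :: u) + h (true :: u)) l).
Proof. induction l; simpl; auto. rewrite IHl. lia. Qed.

Lemma pow2_pos D : 1 <= 2 ^ D.
Proof. induction D; simpl; lia. Qed.

Lemma code_sum D : forall h, natsum (2 ^ D) (fun j => h (word_of_nat (2 ^ D - 1 + j))) = sumlist (map h (words D)).
Proof.
  induction D; intros h. simpl. rewrite word0. lia.
  change (2 ^ S D) with (2 * 2 ^ D). rewrite natsum_double. simpl words. rewrite sumlist_flat.
  rewrite <- IHD. apply natsum_ext. intros j _. pose proof (pow2_pos D).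
  replace (2 * 2 ^ D - 1 + 2 * j) with (S (2 * (2 ^ D - 1 + j))) by lia.
  replace (2 * 2 ^ D - 1 + S (2 * j)) with (S (S (2 * (2 ^ D - 1 + j)))) by lia.
  rewrite !wordS. rewrite Nat.odd_succ, Nat.even_mul, Nat.odd_mul. cbn [Nat.odd Nat.even]. rewrite ?andb_false_l, ?orb_true_l.
  rewrite Nat.div2_double, Nat.div2_succ_double. reflexivity.
Qed.

Lemma words_len D u : In u (words D) -> length u = D.
Proof.
  revert u; induction D; simpl; intros u H. destruct H as [<-|[]]; reflexivity.
  apply in_flat_map in H. destruct H as [v [Hv H]]. simpl in H.
  destruct H as [<-|[<-|[]]]; simpl; f_equal; auto.
Qed.

Lemma words_in D u : length u = D -> In u (words D).
Proof.
  revert u; induction D; intros u H. destruct u; [left; auto| discriminate].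
  destruct u as [|b u]; [discriminate|]. simpl in H. simpl. apply in_flat_map.
  exists u. split. apply IHD; lia. destruct b; simpl; auto.
Qed.

Lemma sumlist_ext (f g : list bool -> nat) l : (forall u, In u l -> f u = g u) ->
  sumlist (map f l) = sumlist (map g l).
Proof. induction l; simpl; intros H; auto. Qed.

Lemma length_words D : length (words D) = 2 ^ D.
Proof.
  induction D; simpl; auto. rewrite <- IHD. clear IHD. induction (words D); simpl; auto. lia.
Qed.

Lemma sumlist_const c (l : list (list bool)) : sumlist (map (fun _ => c) l) = c * length l.
Proof. induction l; simpl; auto. rewrite IHl. lia. Qed.

Lemma count_pref D : forall v, sumlist (map (fun u => Nat.b2n (prefw v u)) (words D)) =
  if length v <=? D then 2 ^ (D - length v) else 0.
Proof.
  induction D; intros v.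
  - destruct v; reflexivity.
  - simpl words. rewrite sumlist_flat. destruct v as [|x v].
    + simpl. rewrite (sumlist_const 2), length_words. lia.
    + rewrite (sumlist_ext _ (fun u => Nat.b2n (prefw v u))).
      2:{ intros u _. destruct x; simpl; destruct (prefw v u); reflexivity. }
      rewrite IHD. simpl length. destruct (length v <=? D) eqn:E; simpl; rewrite E; reflexivity.
Qed.

Lemma natsum_add n f g : natsum n (fun i => f i + g i) = natsum n f + natsum n g.
Proof. induction n; simpl; auto. rewrite IHn. lia. Qed.

Lemma natsum_ge n f i : i < n -> f i <= natsum n f.
Proof. induction n; simpl; intros H. lia. destruct (Nat.eq_dec i n). subst; lia. specialize (IHn ltac:(lia)). lia. Qed.

Lemma union_bound (l : list (list bool)) (g : list bool -> bool) (h : nat -> list bool -> bool) N :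
  (forall u, In u l -> g u = true -> exists i, i < N /\ h i u = true) ->
  sumlist (map (fun u => Nat.b2n (g u)) l) <= natsum N (fun i => sumlist (map (fun u => Nat.b2n (h i u)) l)).
Proof.
  induction l as [|a l IH]; intros H; simpl. lia.
  rewrite natsum_add. specialize (IH (fun u Hu => H u (or_intror Hu))).
  assert (Nat.b2n (g a) <= natsum N (fun i => Nat.b2n (h i a))).
  { destruct (g a) eqn:E; simpl. destruct (H a (or_introl eq_refl) E) as [i [Hi Hh]].
    pose proof (natsum_ge N (fun i => Nat.b2n (h i a)) i Hi). simpl in H0. rewrite Hh in H0. simpl in H0. lia. lia. }
  lia.
Qed.

Local Open Scope R_scope.

Lemma INR_pow2 n : INR (2 ^ n) = 2 ^ n.
Proof. rewrite pow_INR. reflexivity. Qed.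

Lemma pow2_posR n : 0 < 2 ^ n.
Proof. apply pow_lt. lra. Qed.

Lemma cover_count (c : nat -> option (list bool)) N D (g : list bool -> bool) :
  (forall i v, (i < N)%nat -> c i = Some v -> (length v <= D)%nat) ->
  (forall u, In u (words D) -> g u = true -> exists i v, (i < N)%nat /\ c i = Some v /\ prefw v u = true) ->
  INR (sumlist (map (fun u => Nat.b2n (g u)) (words D))) <= 2 ^ D * psum c N.
Proof.
  intros Hlen Hcov.
  set (hc := fun i u => match c i with Some v => prefw v u | None => false end).
  eapply Rle_trans. apply le_INR. apply (union_bound _ g hc N).
  { intros u Hu Hg. destruct (Hcov u Hu Hg) as [i [v [Hi [Hc Hp]]]]. exists i. split; auto.
    unfold hc. rewrite Hc. auto. }
  clear Hcov. induction N. simpl. lra.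
  simpl natsum. simpl psum. rewrite plus_INR. rewrite Rmult_plus_distr_l.
  apply Rplus_le_compat. { apply IHN. intros i v Hi Hc. apply (Hlen i v); auto. }
  unfold hc. destruct (c N) as [w|] eqn:E; simpl cyl_weight.
  - rewrite count_pref. specialize (Hlen N w ltac:(lia) E).
    apply Nat.leb_le in Hlen. rewrite Hlen. apply Nat.leb_le in Hlen.
    rewrite INR_pow2. replace D with ((D - length w) + length w)%nat at 2 by lia.
    rewrite pow_add. rewrite Rmult_assoc, Rinv_r. lra. apply Rgt_not_eq, pow2_posR.
  - rewrite (sumlist_const 0). simpl. lra.
Qed.

Definition pfx (x : cantor) (n : nat) : list bool := map x (seq 0 n).
Definition ext (u : list bool) : cantor := fun j => nth j u false.

Lemma pfx_len x n : length (pfx x n) = n.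
Proof. unfold pfx. rewrite length_map, length_seq. auto. Qed.

Lemma nth_pfx x n j : (j < n)%nat -> nth j (pfx x n) false = x j.
Proof.
  intros H. unfold pfx. rewrite nth_indep with (d' := x 0%nat) by (rewrite length_map, length_seq; auto).
  rewrite map_nth, seq_nth; auto.
Qed.

Lemma is_prefix_pfx v x n : (length v <= n)%nat -> (is_prefix v x <-> prefw v (pfx x n) = true).
Proof.
  intros H. rewrite prefw_spec, pfx_len. unfold is_prefix. split.
  - intros H1. split; auto. intros j Hj. rewrite nth_pfx by lia. auto.
  - intros [_ H1] j Hj. rewrite H1 by auto. apply nth_pfx. lia.
Qed.

Lemma prefw_ext v u : prefw v u = true <-> ((length v <= length u)%nat /\ is_prefix v (ext u)).
Proof. rewrite prefw_spec. unfold is_prefix, ext. tauto. Qed.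

Lemma pfx_ext u : pfx (ext u) (length u) = u.
Proof.
  apply nth_ext with (d := false) (d' := false). rewrite pfx_len; auto.
  intros j Hj. rewrite pfx_len in Hj. rewrite nth_pfx; auto.
Qed.

Lemma prefw_trans v u x : prefw v u = true -> is_prefix u x -> is_prefix v x.
Proof.
  rewrite prefw_spec. intros [H1 H2] H3 j Hj. rewrite H2 by auto. apply H3. lia.
Qed.

Lemma prefix_trans v u x : is_prefix v x -> is_prefix u x -> (length v <= length u)%nat -> prefw v u = true.
Proof.
  intros H1 H2 H3. apply prefw_spec. split; auto. intros j Hj. rewrite H1, H2; auto. lia.
Qed.

End F4.

Section F5.

Section Path.
Variable P : list bool -> Prop.
Variable u0 : list bool.

Fixpoint fpath (n : nat) : list bool :=
  match n with
  | 0 => u0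
  | S n => if excluded_middle_informative (P (fpath n ++ [false])) then fpath n ++ [false] else fpath n ++ [true]
  end.

Lemma fpath_len n : length (fpath n) = (length u0 + n)%nat.
Proof. induction n; simpl. lia. destruct excluded_middle_informative; rewrite length_app; simpl; lia. Qed.

Lemma fpath_ext n m : exists t, fpath (n + m) = fpath n ++ t.
Proof.
  induction m. exists []. rewrite Nat.add_0_r, app_nil_r; auto.
  destruct IHm as [t Ht]. replace (n + S m)%nat with (S (n + m)) by lia. simpl.
  destruct excluded_middle_informative; rewrite Ht, <- app_assoc; eexists; eauto.
Qed.

Lemma fpath_nth n m j : (j < length (fpath n))%nat -> (j < length (fpath m))%nat ->
  nth j (fpath n) false = nth j (fpath m) false.
Proof.
  intros H1 H2. destruct (Nat.le_ge_cases n m).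
  - destruct (fpath_ext n (m - n)) as [t Ht]. replace (n + (m - n))%nat with m in Ht by lia.
    rewrite Ht, app_nth1; auto.
  - destruct (fpath_ext m (n - m)) as [t Ht]. replace (m + (n - m))%nat with n in Ht by lia.
    rewrite Ht, app_nth1; auto.
Qed.

Lemma path_lemma : P u0 -> (forall u, P u -> P (u ++ [false]) \/ P (u ++ [true])) ->
  exists x, is_prefix u0 x /\ forall n, (length u0 <= n)%nat -> P (pfx x n).
Proof.
  intros H0 Hs.
  assert (HP : forall n, P (fpath n)).
  { induction n; simpl; auto. destruct excluded_middle_informative; auto.
    destruct (Hs _ IHn); tauto. }
  set (x := fun j => nth j (fpath (S j)) false).
  assert (Hx : forall n, pfx x (length u0 + n) = fpath n).
  { intros n. apply nth_ext with (d := false) (d' := false).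
    rewrite pfx_len, fpath_len; auto.
    intros j Hj. rewrite pfx_len in Hj. rewrite nth_pfx by auto. unfold x.
    apply fpath_nth; rewrite fpath_len; lia. }
  exists x. split.
  - apply (is_prefix_pfx u0 x (length u0) (le_n _)). 
    pose proof (Hx 0%nat) as H. rewrite Nat.add_0_r in H. rewrite H. simpl. apply prefw_spec. split; auto.
  - intros n Hn. replace n with (length u0 + (n - length u0))%nat by lia. rewrite Hx. auto.
Qed.
End Path.

Definition covN (d : nat -> option (list bool)) (N : nat) (x : cantor) : Prop :=
  exists i v, (i < N)%nat /\ d i = Some v /\ is_prefix v x.

Lemma covN_mono d N M x : (N <= M)%nat -> covN d N x -> covN d M x.
Proof. intros H [i [v [H1 [H2 H3]]]]. exists i, v. split; auto. lia. Qed.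

Lemma compactC (d : nat -> option (list bool)) w :
  (forall x, is_prefix w x -> exists i v, d i = Some v /\ is_prefix v x) ->
  exists N, forall x, is_prefix w x -> covN d N x.
Proof.
  intros Hcov. apply NNPP. intros Hn.
  set (P := fun u => forall N, exists x, is_prefix u x /\ ~ covN d N x).
  assert (HnP : forall u, ~ P u -> exists N, forall x, is_prefix u x -> covN d N x).
  { intros u Hu. apply NNPP. intros Hc. apply Hu. intros N.
    apply NNPP. intros Hc2. apply Hc. exists N. intros x Hx. apply NNPP. intros Hc3.
    apply Hc2. exists x. auto. }
  assert (Hw : P w). { intros N. apply NNPP. intros Hc. apply Hn. exists N. intros x Hx.
    apply NNPP. intros Hc2. apply Hc. exists x; auto. }
  assert (Hsplit : forall u, P u -> P (u ++ [false]) \/ P (u ++ [true])).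
  { intros u Hu. apply NNPP. intros Hc. apply not_or_and in Hc. destruct Hc as [H0 H1].
    destruct (HnP _ H0) as [N0 HN0]. destruct (HnP _ H1) as [N1 HN1].
    destruct (Hu (Nat.max N0 N1)) as [x [Hx Hnc]]. apply Hnc.
    assert (Hb : forall b, x (length u) = b -> is_prefix (u ++ [b]) x).
    { intros b Hb j Hj. rewrite length_app in Hj. simpl in Hj.
      destruct (Nat.lt_ge_cases j (length u)). rewrite app_nth1 by auto. apply Hx; auto.
      replace j with (length u) by lia. rewrite app_nth2 by lia. rewrite Nat.sub_diag. simpl. auto. }
    destruct (x (length u)) eqn:E.
    - apply (covN_mono d N1). lia. apply HN1, Hb; auto.
    - apply (covN_mono d N0). lia. apply HN0, Hb; auto. }
  destruct (path_lemma P w Hw Hsplit) as [x [Hx HPx]].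
  destruct (Hcov x Hx) as [i [v [Hd Hv]]].
  destruct (HPx (Nat.max (length v) (length w)) ltac:(lia) (S i)) as [y [Hy Hnc]].
  apply Hnc. exists i, v. split; [lia|]. split; auto.
  eapply prefw_trans; [|exact Hy]. apply is_prefix_pfx; auto. lia.
Qed.

End F5.

Section F6.

Fixpoint mlen (c : nat -> option (list bool)) (N : nat) : nat :=
  match N with 0 => 0 | S N => Nat.max (mlen c N) (match c N with Some v => length v | None => 0 end) end.

Lemma mlen_ok c N i v : (i < N)%nat -> c i = Some v -> (length v <= mlen c N)%nat.
Proof.
  induction N; simpl; intros H1 H2. lia.
  destruct (Nat.eq_dec i N). subst. rewrite H2. lia. specialize (IHN ltac:(lia) H2). lia.
Qed.

Local Open Scope R_scope.

Lemma cyl_lower (S : cantor -> Prop) w : (forall x, is_prefix w x -> S x) -> mu_ge S (/ 2 ^ length w).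
Proof.
  intros HS c Hc r' Hr'.
  destruct (compactC c w) as [N HN].
  { intros x Hx. destruct (Hc x (HS x Hx)) as [i [v [H1 H2]]]. eauto. }
  set (D := Nat.max (length w) (mlen c N)).
  assert (Hcc := cover_count c N D (prefw w)).
  rewrite count_pref in Hcc.
  assert (Hle : (length w <= D)%nat) by (unfold D; lia).
  apply Nat.leb_le in Hle. rewrite Hle in Hcc. apply Nat.leb_le in Hle.
  assert (Hb : 2 ^ (D - length w) <= 2 ^ D * psum c N).
  { rewrite <- INR_pow2. apply Hcc.
    - intros i v Hi Hv. pose proof (mlen_ok c N i v Hi Hv). unfold D. lia.
    - intros u Hu Hw. apply words_len in Hu.
      apply prefw_ext in Hw. destruct Hw as [_ Hw].
      destruct (HN _ Hw) as [i [v [Hi [Hv Hp]]]]. exists i, v. split; auto. split; auto.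
      apply prefw_ext. split; auto. rewrite Hu. pose proof (mlen_ok c N i v Hi Hv). unfold D. lia. }
  exists N. assert (E2 : 2 ^ D = 2 ^ (D - length w) * 2 ^ length w).
  { rewrite <- pow_add. f_equal. lia. }
  rewrite E2 in Hb.
  assert (0 < 2 ^ (D - length w)) by apply pow2_posR.
  assert (0 < 2 ^ length w) by apply pow2_posR.
  assert (1 <= 2 ^ length w * psum c N).
  { apply Rmult_le_reg_l with (2 ^ (D - length w)); auto. rewrite Rmult_1_r, <- Rmult_assoc. exact Hb. }
  assert (/ 2 ^ length w <= psum c N).
  { apply Rmult_le_reg_l with (2 ^ length w); auto. rewrite Rinv_r; lra. }
  lra.
Qed.

End F6.

Section F7.

Definition vE := Orc (div2E (div2E (V 0))).
Definition progK1 : ex :=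
  iteE (oddE (V 0)) (K 2)
    (iteE (oddE (div2E (V 0)))
       (iteE (notE vE) (K 0) (Tm (K 3) (pow2E (Mn vE (K 1)))))
       (Tm (K 7) (pow2E (div2E (div2E (V 0)))))).

Definition qK1 (p : baire) (n : nat) : nat :=
  if Nat.odd n then 2 else
  if Nat.odd (Nat.div2 n) then
    (match p (Nat.div2 (Nat.div2 n)) with 0 => 0 | S m => 3 * 2 ^ m end)
  else 7 * 2 ^ (Nat.div2 (Nat.div2 n)).

Lemma ev_progK1 p n : ev p [n] progK1 = qK1 p n.
Proof.
  unfold progK1, qK1.
  rewrite (ev_iteE _ _ _ _ _ (Nat.odd n)) by apply ev_oddE.
  destruct (Nat.odd n). reflexivity.
  rewrite (ev_iteE _ _ _ _ _ (Nat.odd (Nat.div2 n))) by (rewrite ev_oddE, ev_div2E; reflexivity).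
  destruct (Nat.odd (Nat.div2 n)).
  - assert (HV : ev p [n] vE = p (Nat.div2 (Nat.div2 n))).
    { unfold vE. cbn [ev]. rewrite !ev_div2E. reflexivity. }
    rewrite (ev_iteE _ _ _ _ _ (p (Nat.div2 (Nat.div2 n)) =? 0)).
    2:{ rewrite ev_eqzE, HV. reflexivity. }
    destruct (p (Nat.div2 (Nat.div2 n))) eqn:E; cbn [Nat.eqb]. reflexivity.
    transitivity (3 * ev p [n] (pow2E (Mn vE (K 1))))%nat. reflexivity.
    rewrite ev_pow2E. change (ev p [n] (Mn vE (K 1))) with (ev p [n] vE - 1)%nat.
    rewrite HV, Nat.sub_succ, Nat.sub_0_r. reflexivity.
  - transitivity (7 * ev p [n] (pow2E (div2E (div2E (V 0)))))%nat. reflexivity.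
    rewrite ev_pow2E, !ev_div2E. reflexivity.
Qed.

Definition okfE y := Tm (notE (notE y)) (notE (oddE (Mn y (K 1)))).
Definition lzE : ex := sumE (Orc (K 0)) (prodE (Sc (V 0)) (okfE (iterTE (V 0) (Orc (K 0))))).

Definition okf (y : nat) : bool := negb (y =? 0) && negb (Nat.odd (y - 1)).
Definition lzF (c : nat) : nat := natsum c (fun j => Nat.b2n (fa (S j) (fun i => okf (iterT i c)))).

Lemma ev_lzE p a : ev p a lzE = lzF (p 0%nat).
Proof.
  unfold lzE, lzF. rewrite ev_sumE. simpl ev at 1. apply natsum_ext. intros j _.
  rewrite ev_prodE, <- natprod_b2n. simpl ev at 1. apply natprod_ext. intros i _.
  assert (HI : ev p (i :: j :: a) (iterTE (V 0) (Orc (K 0))) = iterT i (p 0%nat)).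
  { rewrite ev_iterTE. reflexivity. }
  unfold okfE, okf. apply ev_andE. apply ev_notE'. rewrite ev_eqzE, HI. reflexivity.
  apply ev_notE'. rewrite ev_oddE. f_equal. f_equal. cbn [ev]. rewrite HI. reflexivity.
Qed.

Lemma okf_word y : okf y = match word_of_nat y with false :: _ => true | _ => false end.
Proof.
  destruct y. reflexivity. rewrite wordS. unfold okf. simpl. rewrite Nat.sub_0_r.
  destruct (Nat.odd y); reflexivity.
Qed.

Lemma fa_true n f : fa n f = true <-> forall i, (i < n)%nat -> f i = true.
Proof.
  induction n; simpl. split; auto; intros; lia.
  rewrite andb_true_iff, IHn. split.
  - intros [H1 H2] i Hi. destruct (Nat.eq_dec i n). subst; auto. apply H1; lia.
  - intros H. split. intros; apply H; lia. apply H; lia.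
Qed.

Lemma natsum_lt c n : (n <= c)%nat -> natsum c (fun j => Nat.b2n (j <? n)) = n.
Proof.
  induction c; simpl; intros H. lia.
  destruct (Nat.eq_dec n (S c)). subst. rewrite (natsum_ext _ _ (fun _ => 1%nat)).
  2:{ intros j Hj. destruct (Nat.ltb_spec j (S c)); simpl; lia. }
  assert (forall k, natsum k (fun _ => 1%nat) = k) by (induction k; simpl; lia).
  rewrite H0. destruct (Nat.ltb_spec c (S c)); simpl; lia.
  rewrite IHc by lia. destruct (Nat.ltb_spec c n); simpl; lia.
Qed.

Lemma skipn_app_repeat i n (v : list bool) : (i <= n)%nat ->
  skipn i (repeat false n ++ v) = repeat false (n - i) ++ v.
Proof.
  revert n; induction i; intros n H. rewrite Nat.sub_0_r. reflexivity.
  destruct n. lia. simpl. apply IHi. lia.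
Qed.

Lemma lz_ok c n v : word_of_nat c = repeat false n ++ true :: v -> lzF c = n.
Proof.
  intros Hw. unfold lzF.
  assert (Hn : (n < c)%nat).
  { pose proof (word_len c). rewrite Hw, length_app, repeat_length in H. simpl in H. lia. }
  rewrite (natsum_ext _ _ (fun j => Nat.b2n (j <? n))). apply natsum_lt; lia.
  intros j Hj. f_equal.
  destruct (Nat.ltb_spec j n).
  - apply fa_true. intros i Hi. rewrite okf_word, word_iterT, Hw, skipn_app_repeat by lia.
    destruct (n - i)%nat eqn:E. lia. reflexivity.
  - apply not_true_iff_false. rewrite fa_true. intros H1. specialize (H1 n ltac:(lia)).
    rewrite okf_word, word_iterT, Hw, skipn_app_repeat, Nat.sub_diag in H1 by lia. discriminate.
Qed.

Lemma word_double x : word_of_nat (S (2 * x)) = false :: word_of_nat x.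
Proof. rewrite wordS, Nat.div2_double. rewrite Nat.odd_mul. reflexivity. Qed.

Lemma word_7 j : word_of_nat (7 * 2 ^ j - 1) = repeat false j ++ [true; true].
Proof.
  induction j. reflexivity.
  pose proof (pow2_pos j).
  replace (7 * 2 ^ S j - 1)%nat with (S (2 * (7 * 2 ^ j - 1))) by (simpl; lia).
  rewrite word_double, IHj. reflexivity.
Qed.

Lemma word_3 j : word_of_nat (3 * 2 ^ j - 1) = repeat false j ++ [true].
Proof.
  induction j. reflexivity.
  pose proof (pow2_pos j).
  replace (3 * 2 ^ S j - 1)%nat with (S (2 * (3 * 2 ^ j - 1))) by (simpl; lia).
  rewrite word_double, IHj. reflexivity.
Qed.

Lemma is_prefix_rep j l x : is_prefix (repeat false j ++ l) x <->
  (forall t, (t < j)%nat -> x t = false) /\ (forall t, (t < length l)%nat -> x (j + t)%nat = nth t l false).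
Proof.
  unfold is_prefix. rewrite length_app, repeat_length. split.
  - intros H. split.
    + intros t Ht. rewrite <- H by lia. rewrite app_nth1 by (rewrite repeat_length; lia).
      apply nth_repeat.
    + intros t Ht. rewrite <- H by lia. rewrite app_nth2 by (rewrite repeat_length; lia).
      rewrite repeat_length. f_equal. lia.
  - intros [H1 H2] t Ht. destruct (Nat.lt_ge_cases t j).
    + rewrite app_nth1 by (rewrite repeat_length; lia). rewrite nth_repeat, H1; auto.
    + rewrite app_nth2 by (rewrite repeat_length; lia). rewrite repeat_length.
      rewrite <- H2 by lia. f_equal. lia.
Qed.

Definition Bset (p : baire) (x : cantor) : Prop :=
  (forall j, ~ is_prefix (repeat false j ++ [true; true]) x) /\
  (forall j m, p j = S m -> ~ is_prefix (repeat false m ++ [true]) x).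

Lemma qK1_even p j : qK1 p (2 * (2 * j)) = (7 * 2 ^ j)%nat.
Proof.
  unfold qK1. rewrite Nat.odd_mul, Nat.div2_double, Nat.odd_mul, Nat.div2_double. reflexivity.
Qed.

Lemma qK1_odd p j : qK1 p (2 * (2 * j + 1)) = match p j with 0 => 0 | S m => 3 * 2 ^ m end.
Proof.
  unfold qK1. rewrite Nat.odd_mul, Nat.div2_double. simpl andb.
  replace (2 * j + 1)%nat with (S (2 * j)) by lia.
  rewrite Nat.odd_succ, Nat.even_mul, Nat.div2_succ_double. reflexivity.
Qed.

Lemma B_char p x : (forall i m, qK1 p (2 * i) = S m -> ~ is_prefix (word_of_nat m) x) <-> Bset p x.
Proof.
  split.
  - intros H. split.
    + intros j Hj. apply (H (2 * j) (7 * 2 ^ j - 1))%nat.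
      rewrite qK1_even. pose proof (pow2_pos j). lia. rewrite word_7. auto.
    + intros j m Hp Hm. apply (H (2 * j + 1) (3 * 2 ^ m - 1))%nat.
      rewrite qK1_odd, Hp. pose proof (pow2_pos m). lia. rewrite word_3. auto.
  - intros [H1 H2] i m Hq. destruct (Nat.Even_or_Odd i) as [[j ->]|[j ->]].
    + rewrite qK1_even in Hq. replace m with (7 * 2 ^ j - 1)%nat by lia. rewrite word_7. apply H1.
    + rewrite qK1_odd in Hq. destruct (p j) as [|m'] eqn:E. discriminate.
      replace m with (3 * 2 ^ m' - 1)%nat by lia. rewrite word_3. apply (H2 j); auto.
Qed.

End F7.

Section F8.
Local Open Scope R_scope.

Lemma mu_ge_mono (S1 S2 : cantor -> Prop) r : (forall x, S1 x -> S2 x) -> mu_ge S1 r -> mu_ge S2 r.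
Proof. intros H H1 c Hc. apply H1. intros x Hx. apply Hc, H, Hx. Qed.

Lemma B_pos p n : (~ exists i, p i = S n) -> mu_pos (Bset p).
Proof.
  intros Hn. exists (/ 2 ^ length (repeat false n ++ [true; false])). split.
  apply Rinv_0_lt_compat, pow2_posR.
  apply cyl_lower. intros x Hx. apply is_prefix_rep in Hx. destruct Hx as [H1 H2].
  assert (Hn0 : x n = true) by (rewrite <- (Nat.add_0_r n); apply (H2 0%nat); simpl; lia).
  assert (Hn1 : x (S n) = false) by (rewrite <- Nat.add_1_r; apply (H2 1%nat); simpl; lia).
  split.
  - intros j Hj. apply is_prefix_rep in Hj. destruct Hj as [J1 J2].
    assert (Jj : x j = true) by (rewrite <- (Nat.add_0_r j); apply (J2 0%nat); simpl; lia).
    assert (Jj1 : x (S j) = true) by (rewrite <- Nat.add_1_r; apply (J2 1%nat); simpl; lia).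
    destruct (lt_eq_lt_dec j n) as [[Hl|He]|Hg].
    + rewrite H1 in Jj by auto. discriminate.
    + subst. congruence.
    + rewrite J1 in Hn0 by auto. discriminate.
  - intros j m Hp Hm. apply is_prefix_rep in Hm. destruct Hm as [J1 J2].
    assert (Jj : x m = true) by (rewrite <- (Nat.add_0_r m); apply (J2 0%nat); simpl; lia).
    destruct (lt_eq_lt_dec m n) as [[Hl|He]|Hg].
    + rewrite H1 in Jj by auto. discriminate.
    + subst. apply Hn. eauto.
    + rewrite J1 in Hn0 by auto. discriminate.
Qed.

Lemma split_word (w : list bool) : (exists n v, w = repeat false n ++ true :: v) \/ w = repeat false (length w).
Proof.
  induction w as [|b w IH]. right; reflexivity.
  destruct b. left. exists 0%nat, w. reflexivity.
  destruct IH as [[n [v ->]]|E]. left. exists (S n), v. reflexivity.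
  right. simpl. rewrite <- E. reflexivity.
Qed.

Lemma psum_none N : psum (fun _ => None) N = 0.
Proof. induction N; simpl; auto. rewrite IHN. simpl. lra. Qed.

Lemma least_true (x : cantor) t : x t = true -> exists n, x n = true /\ forall s, (s < n)%nat -> x s = false.
Proof.
  induction t as [t IH] using lt_wf_ind. intros Ht.
  destruct (classic (exists s, (s < t)%nat /\ x s = true)) as [[s [Hs Hxs]]|Hno].
  - apply (IH s Hs Hxs).
  - exists t. split; auto. intros s Hs. destruct (x s) eqn:E; auto. exfalso. apply Hno. eauto.
Qed.

Definition cv (m : nat) (i : nat) : option (list bool) :=
  match i with 0 => Some (repeat false (m + 3)) | S i => Some (repeat false (m + i) ++ [true; false]) end.

Lemma half k : / 2 ^ (S k) + / 2 ^ (S k) = / 2 ^ k.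
Proof. simpl. assert (0 < 2 ^ k) by apply pow2_posR. field. apply Rgt_not_eq; auto. Qed.

Lemma psum_cv m N : psum (cv m) (S N) + / 2 ^ (m + 1 + N) = / 2 ^ (m + 3) + / 2 ^ (m + 1).
Proof.
  induction N.
  - simpl psum. simpl cyl_weight. rewrite repeat_length, Nat.add_0_r. lra.
  - change (psum (cv m) (S (S N))) with (psum (cv m) (S N) + cyl_weight (cv m (S N))).
    simpl cyl_weight. rewrite length_app, repeat_length. simpl length.
    replace (m + N + 2)%nat with (S (m + 1 + N)) by lia.
    replace (m + 1 + S N)%nat with (S (m + 1 + N)) by lia.
    rewrite <- IHN, <- (half (m + 1 + N)). lra.
Qed.

Lemma inv_pow_add m k : / 2 ^ (m + k) = / 2 ^ m * / 2 ^ k.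
Proof. rewrite pow_add. apply Rinv_mult. Qed.

Lemma L2 p c : mu_ge (fun x => Bset p x /\ is_prefix (word_of_nat c) x)
   ((1 - / 2 ^ 2) * / 2 ^ length (word_of_nat c)) -> ~ exists i, p i = S (lzF c).
Proof.
  intros Hmu.
  assert (Hpos : 0 < / 2 ^ length (word_of_nat c)) by apply Rinv_0_lt_compat, pow2_posR.
  destruct (split_word (word_of_nat c)) as [[n [v Hw]]|Hw].
  - rewrite (lz_ok c n v Hw). intros [i Hi].
    destruct (Hmu (fun _ => None)) with (r' := 0) as [N HN].
    + intros x [[_ HB] Hx]. exfalso. apply (HB i n Hi).
      rewrite Hw in Hx. apply is_prefix_rep in Hx. apply is_prefix_rep. destruct Hx as [H1 H2].
      split; auto. intros t Ht. simpl in Ht. replace t with 0%nat by lia. apply (H2 0%nat). simpl; lia.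
    + simpl. lra.
    + rewrite psum_none in HN. lra.
  - exfalso. set (m := length (word_of_nat c)) in *.
    assert (Hcov : covers (cv m) (fun x => Bset p x /\ is_prefix (word_of_nat c) x)).
    { intros x [[HB1 _] Hx]. rewrite Hw in Hx.
      assert (Hx' : forall t, (t < m)%nat -> x t = false).
      { intros t Ht. rewrite <- (Hx t) by (rewrite repeat_length; auto). apply nth_repeat. }
      destruct (classic (exists t, x t = true)) as [[t Ht]|Hall].
      - destruct (least_true x t Ht) as [n0 [Hn0 Hl]].
        assert (Hm : (m <= n0)%nat).
        { destruct (Nat.lt_ge_cases n0 m); auto. rewrite Hx' in Hn0 by auto. discriminate. }
        destruct (x (S n0)) eqn:E.
        + exfalso. apply (HB1 n0). apply is_prefix_rep. split; auto.
          intros [|[|t']] Ht'; simpl in *; try lia. rewrite Nat.add_0_r; auto.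
          rewrite Nat.add_1_r; auto.
        + exists (S (n0 - m)), (repeat false n0 ++ [true; false]). split.
          simpl. f_equal. f_equal. f_equal. lia.
          apply is_prefix_rep. split; auto.
          intros [|[|t']] Ht'; simpl in *; try lia. rewrite Nat.add_0_r; auto.
          rewrite Nat.add_1_r; auto.
      - exists 0%nat, (repeat false (m + 3)). split. reflexivity.
        intros j Hj. rewrite nth_repeat. destruct (x j) eqn:E; auto. exfalso; apply Hall; eauto. }
    assert (Ha : / 2 ^ (m + 3) + / 2 ^ (m + 1) = 5 / 8 * / 2 ^ m).
    { rewrite !inv_pow_add. simpl. field. assert (0 < 2 ^ m) by apply pow2_posR. apply Rgt_not_eq; auto. }
    destruct (Hmu _ Hcov (5 / 8 * / 2 ^ m)) as [N HN].
    { simpl. fold m. nra. }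
    destruct N. simpl in HN. nra.
    pose proof (psum_cv m N). assert (0 < / 2 ^ (m + 1 + N)) by apply Rinv_0_lt_compat, pow2_posR.
    lra.
Qed.

Theorem dir1 : sW_le C_N LDL.
Proof.
  exists (cmp 1 lzE), (cmp 1 progK1). intros G HG p A HpA Hdom.
  simpl in HpA. injection HpA as HA. subst A.
  destruct Hdom as [n Hn].
  split.
  - exists (qK1 p). apply computes_cmp. intros k; rewrite ev_progK1; auto.
  - intros q Hq. rewrite computes_cmp in Hq.
    assert (Eq : forall k, q k = qK1 p k) by (intros k; rewrite Hq, ev_progK1; auto).
    set (B := fun x => forall i m, q (2 * i)%nat = S m -> ~ is_prefix (word_of_nat m) x).
    assert (HB : forall x, B x -> Bset p x).
    { intros x Hx. apply B_char. intros i m Hi. apply (Hx i m). rewrite Eq. auto. }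
    assert (HB' : forall x, Bset p x -> B x).
    { intros x Hx. pose proof (proj2 (B_char p x) Hx) as Hx2. intros i m Hi. apply (Hx2 i m). rewrite <- Eq. auto. }
    destruct (HG q (B, q 1%nat)) as [r [Hr [y [Hy Hrel]]]].
    + reflexivity.
    + destruct (B_pos p n Hn) as [r0 [Hr0 Hmu]]. exists r0. split; auto.
      simpl. apply (mu_ge_mono (Bset p)); auto.
    + exists r. split; auto. simpl in Hy. injection Hy as Hy. subst y.
      simpl in Hrel. split.
      * exists (fun _ => lzF (r 0%nat)). apply computes_cmp. intros k; rewrite ev_lzE; auto.
      * intros s Hs. rewrite computes_cmp in Hs. exists (s 0%nat). split. reflexivity.
        simpl. rewrite Hs, ev_lzE. apply (L2 p (r 0%nat)).
        rewrite Eq in Hrel. apply (mu_ge_mono _ _ _ (fun x H => conj (HB x (proj1 H)) (proj2 H)) Hrel).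
Qed.

End F8.

Section F9.

Fixpoint triF (n : nat) : nat := match n with 0 => 0 | S m => triF m + S m end.
Definition triE x := Rec x (K 0) (Pl (V 1) (Sc (V 0))).
Lemma ev_triE p a x : ev p a (triE x) = triF (ev p a x).
Proof. simpl. induction (ev p a x); simpl; auto. Qed.

Definition ME := sumE (Sc (V 0)) (ltE (triE (Sc (V 0))) (Sc (V 1))).
Definition sE := Mn (V 0) (triE ME).
Definition cE := Mn ME sE.
Definition Mf (n : nat) : nat := natsum (S n) (fun t => Nat.b2n (triF (S t) <? S n)).
Definition sF n := (n - triF (Mf n))%nat.
Definition cF n := (Mf n - sF n)%nat.

Lemma ev_ME p n : ev p [n] ME = Mf n.
Proof.
  unfold ME, Mf. rewrite ev_sumE. apply natsum_ext. intros j _.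
  rewrite ev_ltE, ev_triE. reflexivity.
Qed.
Lemma ev_sE p n : ev p [n] sE = sF n.
Proof. unfold sE, sF. cbn [ev]. rewrite ev_triE, ev_ME. reflexivity. Qed.
Lemma ev_cE p n : ev p [n] cE = cF n.
Proof. unfold cE, cF. cbn [ev]. rewrite ev_sE, ev_ME. reflexivity. Qed.

Definition rejF (p : baire) (c s : nat) : bool :=
  (natsum (2 ^ s) (fun j => Nat.b2n (preF c (2 ^ s - 1 + j) &&
      fa s (fun i => negb (negb (p (2 * i)%nat =? 0) && preF (p (2 * i)%nat - 1) (2 ^ s - 1 + j)))))
   * 2 ^ (p 1%nat) <?
   (2 ^ (p 1%nat) - 1) * natsum (2 ^ s) (fun j => Nat.b2n (preF c (2 ^ s - 1 + j))))%nat.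

Definition uE sx := Pl (Mn (pow2E (lift 0 1 sx)) (K 1)) (V 0).
Definition RiE := Orc (Tm (K 2) (V 0)).
Definition EE cx sx := sumE (pow2E sx) (preE (lift 0 1 cx) (uE sx)).
Definition CE cx sx := sumE (pow2E sx) (Tm (preE (lift 0 1 cx) (uE sx))
   (prodE (lift 0 1 sx) (notE (Tm (notE (notE RiE)) (preE (Mn RiE (K 1)) (lift 0 1 (uE sx))))))).
Definition rejE cx sx := ltE (Tm (CE cx sx) (pow2E (Orc (K 1)))) (Tm (Mn (pow2E (Orc (K 1))) (K 1)) (EE cx sx)).
Definition progK2 := iteE (rejE cE sE) (Sc cE) (K 0).

Lemma ev_uE p a j sx : ev p (j :: a) (uE sx) = (2 ^ ev p a sx - 1 + j)%nat.
Proof. unfold uE. cbn [ev]. rewrite ev_pow2E, ev_lift0. reflexivity. Qed.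

Lemma ev_rejE p a cx sx : ev p a (rejE cx sx) = Nat.b2n (rejF p (ev p a cx) (ev p a sx)).
Proof.
  unfold rejE, rejF. rewrite ev_ltE. cbn [ev]. rewrite !ev_pow2E. cbn [ev]. f_equal. f_equal.
  - f_equal. unfold CE. rewrite ev_sumE, ev_pow2E. apply natsum_ext. intros j _.
    apply ev_andE.
    + rewrite ev_preE, ev_lift0, ev_uE. reflexivity.
    + rewrite ev_prodE, <- natprod_b2n, ev_lift0. apply natprod_ext. intros i _.
      apply ev_notE'. apply ev_andE. apply ev_notE'. rewrite ev_eqzE. reflexivity.
      rewrite ev_preE, ev_lift0, ev_uE. reflexivity.
  - f_equal. unfold EE. rewrite ev_sumE, ev_pow2E. apply natsum_ext. intros j _.
    rewrite ev_preE, ev_lift0, ev_uE. reflexivity.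
Qed.

Definition qK2 (p : baire) (n : nat) : nat := if rejF p (cF n) (sF n) then S (cF n) else 0.

Lemma ev_progK2 p n : ev p [n] progK2 = qK2 p n.
Proof.
  unfold progK2, qK2. rewrite (ev_iteE _ _ _ _ _ (rejF p (cF n) (sF n))).
  destruct rejF; cbn [ev]; rewrite ?ev_cE; reflexivity.
  rewrite ev_rejE, ev_cE, ev_sE. reflexivity.
Qed.

Lemma triF_mono a b : (a <= b)%nat -> (triF a <= triF b)%nat.
Proof. induction 1; simpl; lia. Qed.
Lemma triF_ge m : (m <= triF m)%nat.
Proof. induction m; simpl; lia. Qed.

Lemma unpair_surj c s : exists n, cF n = c /\ sF n = s.
Proof.
  exists (triF (c + s) + s)%nat.
  assert (HM : Mf (triF (c + s) + s) = (c + s)%nat).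
  { unfold Mf. rewrite (natsum_ext _ _ (fun t => Nat.b2n (t <? c + s))).
    apply natsum_lt. pose proof (triF_ge (c + s)). lia.
    intros t _. f_equal. destruct (Nat.ltb_spec t (c + s)).
    - apply Nat.ltb_lt. pose proof (triF_mono (S t) (c + s) H). lia.
    - apply Nat.ltb_ge. pose proof (triF_mono (S (c + s)) (S t) ltac:(lia)). cbn [triF] in *. lia. }
  unfold cF, sF. rewrite HM. lia.
Qed.

End F9.

Section F10.

Definition Aset (p : baire) (x : cantor) : Prop :=
  forall i m, p (2 * i)%nat = S m -> ~ is_prefix (word_of_nat m) x.

Definition gA (p : baire) (w : list bool) (s : nat) (u : list bool) : bool :=
  prefw w u && fa s (fun i => negb (negb (p (2 * i)%nat =? 0) && prefw (word_of_nat (p (2 * i)%nat - 1)) u)).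

Lemma rej_counts p c s : rejF p c s =
  (sumlist (map (fun u => Nat.b2n (gA p (word_of_nat c) s u)) (words s)) * 2 ^ (p 1%nat) <?
   (2 ^ (p 1%nat) - 1) * sumlist (map (fun u => Nat.b2n (prefw (word_of_nat c) u)) (words s)))%nat.
Proof.
  unfold rejF. rewrite <- !code_sum.
  rewrite (natsum_ext _ (fun j => Nat.b2n (preF c (2 ^ s - 1 + j)))
     (fun j => Nat.b2n (prefw (word_of_nat c) (word_of_nat (2 ^ s - 1 + j))))).
  2:{ intros j _. rewrite preF_ok. reflexivity. }
  rewrite (natsum_ext _ (fun j => Nat.b2n (preF c (2 ^ s - 1 + j) &&
      fa s (fun i => negb (negb (p (2 * i)%nat =? 0) && preF (p (2 * i)%nat - 1) (2 ^ s - 1 + j)))))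
     (fun j => Nat.b2n (gA p (word_of_nat c) s (word_of_nat (2 ^ s - 1 + j))))).
  2:{ intros j _. unfold gA. rewrite preF_ok. f_equal. f_equal. apply fa_ext. intros i _. rewrite preF_ok. reflexivity. }
  reflexivity.
Qed.

Local Open Scope R_scope.

Lemma sound p c : (forall s, rejF p c s = false) ->
  mu_ge (fun x => Aset p x /\ is_prefix (word_of_nat c) x)
        ((1 - / 2 ^ p 1%nat) * / 2 ^ length (word_of_nat c)).
Proof.
  intros Hnr cc Hcc r' Hr'. apply NNPP; intro Hno.
  assert (Hle : forall N, psum cc N <= r').
  { intros N. apply Rnot_lt_le. intro H. apply Hno. eauto. }
  set (w := word_of_nat c) in *.
  set (d := fun i => if Nat.even i then cc (Nat.div2 i) else
              match p (2 * Nat.div2 i)%nat with 0%nat => None | S m => Some (word_of_nat m) end).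
  assert (Hd : forall x, is_prefix w x -> exists i v, d i = Some v /\ is_prefix v x).
  { intros x Hx. destruct (classic (Aset p x)) as [HA|HA].
    - destruct (Hcc x (conj HA Hx)) as [i [v [H1 H2]]]. exists (2 * i)%nat, v. split; auto.
      unfold d. rewrite Nat.even_mul, Nat.div2_double. auto.
    - apply not_all_ex_not in HA. destruct HA as [i HA]. apply not_all_ex_not in HA.
      destruct HA as [m HA]. apply imply_to_and in HA. destruct HA as [Hp HA]. apply NNPP in HA.
      exists (S (2 * i)), (word_of_nat m). split; auto.
      unfold d. rewrite Nat.even_succ, Nat.odd_even, Nat.div2_succ_double, Hp. reflexivity. }
  destruct (compactC d w Hd) as [N0 HN0].
  set (D := Nat.max (length w) (Nat.max (mlen cc N0) (Nat.max (mlen d N0) N0))).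
  specialize (Hnr D). rewrite rej_counts in Hnr. apply Nat.ltb_ge in Hnr. fold w in Hnr.
  rewrite count_pref in Hnr.
  assert (HwD : (length w <= D)%nat) by (unfold D; lia).
  apply Nat.leb_le in HwD. rewrite HwD in Hnr. apply Nat.leb_le in HwD.
  assert (Hcc2 := cover_count cc N0 D (gA p w D)).
  assert (HC : INR (sumlist (map (fun u => Nat.b2n (gA p w D u)) (words D))) <= 2 ^ D * psum cc N0).
  { apply Hcc2.
    - intros i v Hi Hv. pose proof (mlen_ok cc N0 i v Hi Hv). unfold D. lia.
    - intros u Hu Hg. pose proof (words_len _ _ Hu) as Hlu.
      unfold gA in Hg. apply andb_true_iff in Hg. destruct Hg as [Hwu Hfa].
      apply prefw_ext in Hwu. destruct Hwu as [_ Hwu].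
      destruct (HN0 _ Hwu) as [i' [v [Hi' [Hdv Hv]]]].
      assert (Hpv : prefw v u = true).
      { apply prefw_ext. split; auto. pose proof (mlen_ok d N0 i' v Hi' Hdv). unfold D in *. lia. }
      destruct (Nat.Even_or_Odd i') as [[i ->]|[i ->]].
      + unfold d in Hdv. rewrite Nat.even_mul, Nat.div2_double in Hdv.
        exists i, v. split; [lia|]. auto.
      + exfalso. unfold d in Hdv. replace (2 * i + 1)%nat with (S (2 * i)) in Hdv by lia.
        rewrite Nat.even_succ, Nat.odd_even, Nat.div2_succ_double in Hdv.
        destruct (p (2 * i)%nat) as [|m] eqn:Ep; [discriminate|]. injection Hdv as <-.
        rewrite fa_true in Hfa. specialize (Hfa i ltac:(unfold D in *; lia)).
        rewrite Ep in Hfa. simpl in Hfa. rewrite Nat.sub_0_r, Hpv in Hfa. discriminate. }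
  apply le_INR in Hnr. rewrite !mult_INR, minus_INR in Hnr by apply pow2_pos.
  rewrite !INR_pow2 in Hnr. simpl INR in Hnr.
  set (Cn := INR (sumlist (map (fun u => Nat.b2n (gA p w D u)) (words D)))) in *.
  set (Kk := 2 ^ p 1%nat) in *. set (P := 2 ^ (D - length w)) in *. set (W := 2 ^ length w) in *.
  assert (E2 : 2 ^ D = P * W). { unfold P, W. rewrite <- pow_add. f_equal. lia. }
  rewrite E2 in HC.
  assert (HK : 0 < Kk) by apply pow2_posR. assert (HP : 0 < P) by apply pow2_posR.
  assert (HW : 0 < W) by apply pow2_posR.
  specialize (Hle N0).
  assert (Ht : (1 - / Kk) * / W * (P * W * Kk) = (Kk - 1) * P) by (field; split; lra).
  assert (H3 : (Kk - 1) * P <= r' * (P * W * Kk)).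
  { apply Rle_trans with (Cn * Kk). lra.
    apply Rle_trans with (P * W * psum cc N0 * Kk). apply Rmult_le_compat_r; lra.
    assert (0 < P * W * Kk) by (apply Rmult_lt_0_compat; [apply Rmult_lt_0_compat|]; lra).
    rewrite (Rmult_comm r'). rewrite Rmult_assoc, (Rmult_comm (psum cc N0) Kk), <- Rmult_assoc.
    apply Rmult_le_compat_l; lra. }
  assert (0 < P * W * Kk) by (apply Rmult_lt_0_compat; [apply Rmult_lt_0_compat|]; lra).
  rewrite <- Ht in H3. apply Rmult_le_reg_r in H3; auto. lra.
Qed.

End F10.

Section F11.

Lemma count_filter (g : list bool -> bool) l : sumlist (map (fun u => Nat.b2n (g u)) l) = length (filter g l).
Proof. induction l; simpl; auto. destruct (g a); simpl; lia. Qed.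

Local Open Scope R_scope.

Definition weight (l : list (list bool)) : R := fold_right (fun u acc => / 2 ^ length u + acc) 0 l.

Lemma weight_app l1 l2 : weight (l1 ++ l2) = weight l1 + weight l2.
Proof. induction l1; simpl; lra. Qed.

Lemma weight_const l s : (forall u, In u l -> length u = s) -> weight l = INR (length l) * / 2 ^ s.
Proof.
  induction l; intros H. simpl. lra. cbn [weight fold_right length]. fold (weight l).
  rewrite IHl by (intros; apply H; simpl; auto).
  rewrite (H a) by (simpl; auto). rewrite S_INR. lra.
Qed.

Lemma weight_nonneg l : 0 <= weight l.
Proof. induction l; simpl. lra. pose proof (Rinv_0_lt_compat _ (pow2_posR (length a))). lra. Qed.

Lemma psum_shift c N : psum c (S N) = cyl_weight (c 0%nat) + psum (fun i => c (S i)) N.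
Proof. induction N; simpl in *. lra. rewrite IHN. lra. Qed.

Lemma psum_list l N : psum (fun i => nth_error l i) N <= weight l.
Proof.
  revert N; induction l; intros N.
  - assert (psum (fun i => nth_error (@nil (list bool)) i) N = 0).
    { induction N; simpl; auto. rewrite IHN. destruct N; simpl; lra. }
    simpl. lra.
  - destruct N. simpl. pose proof (weight_nonneg (a :: l)). simpl in *. lra.
    rewrite psum_shift. simpl. specialize (IHl N). lra.
Qed.

Lemma pfx_prefix x n : is_prefix (pfx x n) x.
Proof. intros j Hj. rewrite pfx_len in Hj. apply nth_pfx; auto. Qed.

Lemma nonempty p : mu_pos (Aset p) -> exists c, forall s, rejF p c s = false.
Proof.
  intros [r [Hr Hmu]]. apply NNPP; intro Hno.
  assert (Hrej : forall c, exists s, rejF p c s = true).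
  { intros c. apply NNPP. intro H. apply Hno. exists c. intros s.
    apply not_true_is_false. intro H'. apply H. eauto. }
  set (k := p 1%nat).
  assert (Hrej2 : forall w s, rejF p (nat_of_word w) s = true ->
     (length w <= s)%nat /\ (1 <= k)%nat /\
     INR (length (filter (gA p w s) (words s))) * 2 ^ k < (2 ^ k - 1) * 2 ^ (s - length w)).
  { intros w s H. rewrite rej_counts, word_nat, count_pref, count_filter in H.
    apply Nat.ltb_lt in H. fold k in H.
    destruct (Nat.leb_spec (length w) s); [|lia].
    assert (Hk : (1 <= k)%nat).
    { destruct k. simpl in H. lia. lia. }
    split; auto. split; auto.
    apply lt_INR in H. rewrite !mult_INR, minus_INR, !INR_pow2 in H by apply pow2_pos.
    simpl INR in H. exact H. }
  destruct (Hrej 0%nat) as [s0 Hs0].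
  assert (Hk : (1 <= k)%nat) by (change 0%nat with (nat_of_word []) in Hs0; apply (Hrej2 [] s0 Hs0)).
  set (sw := fun w => proj1_sig (constructive_indefinite_description _ (Hrej (nat_of_word w)))).
  assert (Hsw : forall w, rejF p (nat_of_word w) (sw w) = true).
  { intros w. unfold sw. destruct constructive_indefinite_description. auto. }
  set (U := fun w => filter (gA p w (sw w)) (words (sw w))).
  set (dl := 1 - / 2 ^ k).
  assert (HK : 2 <= 2 ^ k).
  { replace 2 with (2 ^ 1) at 1 by (simpl; lra). apply Rle_pow; [lra|exact Hk]. }
  assert (Hdl : 0 <= dl < 1).
  { unfold dl. assert (0 < / 2 ^ k) by apply Rinv_0_lt_compat, pow2_posR.
    assert (/ 2 ^ k <= / 2) by (apply Rinv_le_contravar; lra). lra. }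
  assert (HU : forall w, weight (U w) <= dl * / 2 ^ length w).
  { intros w. destruct (Hrej2 w (sw w) (Hsw w)) as [Hl [_ Hc]].
    rewrite (weight_const _ (sw w)).
    2:{ intros u Hu. unfold U in Hu. apply filter_In in Hu. apply words_len, Hu. }
    fold (U w) in Hc. set (Cn := INR (length (U w))) in *.
    set (Kk := 2 ^ k) in *. set (P := 2 ^ (sw w - length w)) in *. set (W := 2 ^ length w).
    assert (E2 : 2 ^ sw w = P * W). { unfold P, W. rewrite <- pow_add. f_equal. lia. }
    rewrite E2. unfold dl. fold Kk.
    assert (0 < P) by apply pow2_posR. assert (0 < W) by apply pow2_posR.
    assert (0 < Kk) by apply pow2_posR.
    assert (Cn * / (P * W) * (P * W * Kk) = Cn * Kk) by (field; split; lra).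
    assert ((1 - / Kk) * / W * (P * W * Kk) = (Kk - 1) * P) by (field; split; lra).
    assert (0 < P * W * Kk) by (apply Rmult_lt_0_compat; [apply Rmult_lt_0_compat|]; lra).
    apply Rmult_le_reg_r with (P * W * Kk); auto. lra. }
  assert (HUc : forall w x, Aset p x -> is_prefix w x -> exists u, In u (U w) /\ is_prefix u x).
  { intros w x HA Hx. destruct (Hrej2 w (sw w) (Hsw w)) as [Hl _].
    exists (pfx x (sw w)). split.
    - unfold U. apply filter_In. split. apply words_in, pfx_len.
      unfold gA. apply andb_true_iff. split. apply is_prefix_pfx; auto.
      apply fa_true. intros i Hi. destruct (p (2 * i)%nat) as [|m] eqn:Ep. reflexivity.
      simpl. rewrite Nat.sub_0_r. destruct (prefw (word_of_nat m) (pfx x (sw w))) eqn:E; auto.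
      exfalso. apply (HA i m Ep). eapply prefw_trans. exact E.
      apply pfx_prefix.
    - apply pfx_prefix. }
  set (L := fix L j := match j with 0%nat => [[]] | S j => flat_map U (L j) end).
  assert (HLw : forall j, weight (L j) <= dl ^ j).
  { induction j. simpl. lra. simpl L. rewrite <- tech_pow_Rmult.
    apply Rle_trans with (dl * weight (L j)); [|apply Rmult_le_compat_l; lra].
    clear IHj. induction (L j). simpl. lra.
    simpl. rewrite weight_app. specialize (HU a). lra. }
  assert (HLc : forall j x, Aset p x -> exists v, In v (L j) /\ is_prefix v x).
  { induction j; intros x HA. exists []. split. simpl; auto. intros t Ht; simpl in Ht; lia.
    destruct (IHj x HA) as [v [Hv Hvx]]. destruct (HUc v x HA Hvx) as [u [Hu Hux]].
    exists u. split; auto. simpl L. apply in_flat_map. eauto. }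
  destruct (pow_lt_1_zero dl ltac:(rewrite Rabs_pos_eq; lra) r Hr) as [j Hj].
  specialize (Hj j (le_n _)). rewrite Rabs_pos_eq in Hj by (apply pow_le; lra).
  destruct (Hmu (fun i => nth_error (L j) i)) with (r' := dl ^ j) as [N HN]; auto.
  - intros x Hx. destruct (HLc j x Hx) as [v [Hv Hvx]]. apply In_nth_error in Hv.
    destruct Hv as [i Hi]. eauto.
  - pose proof (psum_list (L j) N). pose proof (HLw j). lra.
Qed.

End F11.

Section F12.

Theorem dir2 : sW_le LDL C_N.
Proof.
  exists (cmp 1 (Orc (V 0))), (cmp 1 progK2). intros G HG p x Hpx Hdom.
  simpl in Hpx. injection Hpx as Hx. subst x.
  split.
  - exists (qK2 p). apply computes_cmp. intros n; rewrite ev_progK2; auto.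
  - intros q Hq. rewrite computes_cmp in Hq.
    assert (Eq : forall k, q k = qK2 p k) by (intros k; rewrite Hq, ev_progK2; auto).
    assert (key : forall c, (~ exists i, q i = S c) <-> forall s, rejF p c s = false).
    { intros c. split.
      - intros H s. destruct (rejF p c s) eqn:E; auto. exfalso.
        destruct (unpair_surj c s) as [n [Hc Hs]]. apply H. exists n. rewrite Eq. unfold qK2.
        rewrite Hc, Hs, E. reflexivity.
      - intros H [i Hi]. rewrite Eq in Hi. unfold qK2 in Hi.
        destruct (rejF p (cF i) (sF i)) eqn:E; [|discriminate]. injection Hi as Hi.
        rewrite Hi, H in E. discriminate. }
    destruct (HG q (fun n => ~ exists i, q i = S n)) as [r [Hr [y [Hy Hrel]]]].
    + reflexivity.
    + destruct (nonempty p Hdom) as [c Hc]. exists c. apply key; auto.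
    + exists r. split; auto. simpl in Hy. injection Hy as Hy. subst y. simpl in Hrel.
      split.
      * exists r. apply computes_cmp. intros n. reflexivity.
      * intros s Hs. rewrite computes_cmp in Hs. exists (word_of_nat (s 0%nat)). split. reflexivity.
        simpl. rewrite (Hs 0%nat). cbn [ev nth]. apply sound. apply key. auto.
Qed.

End F12.

Theorem theorem11p2 : sW_equiv LDL C_N.
Proof. split. exact dir2. exact dir1. Qed.
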